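(* Let $n\ge1$ and $\gamma=1$ (so $\beta=2$). There exist no $\ell,R>0$ and $U:[0,R]\to[0,\infty)$, continuous on $[0,R]$ and $C^2$ on $[0,R)$, such that $$U''+\Big(\frac{n-1}{r}-\frac r2\Big)U'+U=1\ \text{ in }(0,R),\quad U(0)=\ell,\ U'(0)=0,\quad U(R)=0,\ (U^{1/2})'(R)=-\frac{\sqrt2}{2}.$$
   Context: $(U^{1/2})'(R)$ is the left derivative at $R$, i.e. $\lim_{r\uparrow R}U^{1/2}(r)/(r-R)$. *)

(* Defs.v *)
From Stdlib Require Import Reals.
From Coquelicot Require Import Coquelicot.
Open Scope R_scope.

Definition is_right_derive (f : R -> R) (x l : R) : Prop :=
  filterlim (fun h => (f (x + h) - f x) / h) (at_right 0) (locally l).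

Definition C2_on_0R (U U1 U2 : R -> R) (Rr : R) : Prop :=
  (forall r, 0 < r < Rr -> is_derive U r (U1 r) /\ is_derive U1 r (U2 r)) /\
  is_right_derive U 0 (U1 0) /\ is_right_derive U1 0 (U2 0) /\
  (forall r, 0 <= r < Rr ->
     filterlim U2 (within (fun x => 0 <= x < Rr) (locally r)) (locally (U2 r))).

Definition cont_on_0R (U : R -> R) (Rr : R) : Prop :=
  forall r, 0 <= r <= Rr ->
    filterlim U (within (fun x => 0 <= x <= Rr) (locally r)) (locally (U r)).

(* Main.v *)
Require Import Defs.
From Stdlib Require Import Reals Lra.
From Coquelicot Require Import Coquelicot.
Open Scope R_scope.
Lemma ballR (x e y : R) : ball x e y -> Rabs (y - x) < e.
Proof. unfold ball; simpl; unfold AbsRing_ball, abs, minus, plus, opp; simpl. auto. Qed.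
Lemma cont_of_der (f : R -> R) x d : is_derive f x d -> continuity_pt f x.
Proof. intros H. apply continuity_pt_filterlim. apply (ex_derive_continuous (V:=R_NormedModule)). exists d; exact H. Qed.
Lemma sqrt2_lt : sqrt 2 < 3/2.
Proof. pose proof (sqrt_sqrt 2 ltac:(lra)). pose proof (sqrt_pos 2). nra. Qed.
Lemma dmul (f g : R -> R) x df dg : is_derive f x df -> is_derive g x dg ->
  is_derive (fun t => f t * g t) x (df * g x + f x * dg).
Proof. intros; apply (is_derive_mult f g x df dg); auto. intros; apply Rmult_comm. Qed.
Lemma dmin (f g : R -> R) x df dg : is_derive f x df -> is_derive g x dg ->
  is_derive (fun t => f t - g t) x (df - dg).
Proof. intros; apply (is_derive_minus f g x df dg); auto. Qed.
Lemma dval (f : R -> R) x d d' : is_derive f x d -> d = d' -> is_derive f x d'.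
Proof. intros; subst; auto. Qed.

Lemma deriv_g (U U1 U2 : R->R) (N r : R) : 0<r -> is_derive U r (U1 r) -> is_derive U1 r (U2 r) ->
  U2 r + ((N-1)/r - r/2)*U1 r + U r = 1 ->
  is_derive (fun t => exp((N-1)*ln t - t^2/4) * ((U t - 1)*(2*t) - (t^2-2*N)*U1 t)) r 0.
Proof.
intros hr dU dU1 ode.
assert (hp : is_derive (fun t => exp((N-1)*ln t - t^2/4)) r (exp((N-1)*ln r - r^2/4) * ((N-1)/r - r/2))).
{ auto_derive. lra. replace (exp (_ + _)) with (exp ((N-1)*ln r - r^2/4)) by (f_equal; field). field. lra. }
assert (hc : is_derive (fun t => U t - 1) r (U1 r)).
{ eapply dval. apply dmin. exact dU. apply (is_derive_const (V:=R_NormedModule)). simpl. unfold zero; simpl; ring. }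
assert (h2 : is_derive (fun t => 2*t) r 2). { auto_derive; auto; ring. }
assert (h3 : is_derive (fun t => t^2 - 2*N) r (2*r)). { auto_derive; auto; ring. }
pose proof (dmin _ _ _ _ _ (dmul _ _ _ _ _ hc h2) (dmul _ _ _ _ _ h3 dU1)) as hW.
eapply dval. apply (dmul _ _ _ _ _ hp hW).
match goal with |- ?a = _ => change (a = (0:R)) end. replace (U2 r) with (1 - U r - ((N-1)/r - r/2)*U1 r) by lra. field. lra.
Qed.

Theorem lemma6p9 (n : nat) (hn : (1 <= n)%nat) :
  ~ exists (l Rr : R) (U U1 U2 : R -> R),
      0 < l /\ 0 < Rr /\
      (forall r, 0 <= r <= Rr -> 0 <= U r) /\
      cont_on_0R U Rr /\
      C2_on_0R U U1 U2 Rr /\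
      (forall r, 0 < r < Rr ->
         U2 r + ((INR n - 1) / r - r / 2) * U1 r + U r = 1) /\
      U 0 = l /\ U1 0 = 0 /\
      U Rr = 0 /\
      filterlim (fun r => sqrt (U r) / (r - Rr)) (at_left Rr)
                (locally (- sqrt 2 / 2)).
Proof.
intros [l [A [U [U1 [U2 [hl [hA [hpos [hcont [[hd [hr0 [hr1 hc2]]] [ode [hU0 [hU10 [hUA hlim]]]]]]]]]]]]]].
set (N := INR n) in *.
assert (hN : 1 <= N) by (apply (le_INR 1 n) in hn; simpl in hn; exact hn).
set (W := fun t => (U t - 1)*(2*t) - (t^2-2*N)*U1 t).
set (g := fun t => exp((N-1)*ln t - t^2/4) * W t).
assert (hg' : forall r, 0 < r < A -> is_derive g r 0).
{ intros r hr. destruct (hd r hr). unfold g, W. apply (deriv_g U U1 U2); auto; try lra. }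
assert (hgc : forall a b, 0 < a < A -> 0 < b < A -> g a = g b).
{ intros a b ha hb.
  assert (h1 : 0 < Rmin a b) by (apply Rmin_glb_lt; lra).
  assert (h2 : Rmax a b < A) by (apply Rmax_lub_lt; lra).
  destruct (MVT_gen g a b (fun _ => 0)) as [c [_ hc]].
  - intros x hx. apply hg'. simpl in hx. lra.
  - intros x hx. apply (cont_of_der _ _ 0). apply hg'. simpl in hx. lra.
  - lra. }
assert (hW0 : exists C d, 0 < C /\ 0 < d /\ forall h, 0 < h < d -> Rabs (W h) <= C * h).
{ pose proof (proj1 (filterlim_locally _ _) hr1 (mkposreal 1 Rlt_0_1)) as H1.
  destruct H1 as [d1 Hd1].
  pose proof (hcont 0 ltac:(lra) (ball (U 0) (mkposreal 1 Rlt_0_1)) (locally_ball _ _)) as H2.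
  destruct H2 as [d2 Hd2].
  exists (2*(l+2) + (1+2*N)*(Rabs (U2 0)+1)).
  exists (Rmin (Rmin d1 d2) (Rmin A 1)).
  split. { pose proof (Rabs_pos (U2 0)). nra. }
  split. { destruct d1, d2; simpl. repeat apply Rmin_glb_lt; lra. }
  intros h hh.
  assert (hd1 : h < d1) by (pose proof (Rmin_l (Rmin d1 d2) (Rmin A 1)); pose proof (Rmin_l d1 d2); lra).
  assert (hd2 : h < d2) by (pose proof (Rmin_l (Rmin d1 d2) (Rmin A 1)); pose proof (Rmin_r d1 d2); lra).
  assert (hA1 : h < A) by (pose proof (Rmin_r (Rmin d1 d2) (Rmin A 1)); pose proof (Rmin_l A 1); lra).
  assert (h1 : h < 1) by (pose proof (Rmin_r (Rmin d1 d2) (Rmin A 1)); pose proof (Rmin_r A 1); lra).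
  assert (b1 : ball 0 d1 h) by (apply ball_sym; unfold ball; simpl; unfold AbsRing_ball, abs, minus, plus, opp; simpl; rewrite Rabs_left1; lra).
  assert (b2 : ball 0 d2 h) by (apply ball_sym; unfold ball; simpl; unfold AbsRing_ball, abs, minus, plus, opp; simpl; rewrite Rabs_left1; lra).
  specialize (Hd1 h b1 ltac:(lra)). apply ballR in Hd1. simpl in Hd1.
  specialize (Hd2 h b2 ltac:(lra)). simpl in Hd2. apply ballR in Hd2. rewrite hU0 in Hd2.
  rewrite Rplus_0_l, hU10, Rminus_0_r in Hd1.
  set (q := U1 h / h) in Hd1.
  assert (eq1 : U1 h = q * h) by (unfold q; field; lra).
  assert (bq : Rabs q <= Rabs (U2 0) + 1).
  { pose proof (Rabs_triang_inv q (U2 0)). lra. }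
  assert (bU : Rabs (U h - 1) <= l + 2).
  { apply Rabs_le. apply Rabs_lt_between in Hd2. lra. }
  unfold W. rewrite eq1.
  unfold Rminus at 1. eapply Rle_trans; [apply Rabs_triang|]. rewrite Rabs_Ropp, !Rabs_mult.
  rewrite (Rabs_pos_eq 2) by lra. rewrite (Rabs_pos_eq h) by lra.
  assert (bh : Rabs (h^2 - 2*N) <= 1 + 2*N) by (rewrite Rabs_left1 by nra; nra).
  pose proof (Rabs_pos (U h - 1)). pose proof (Rabs_pos q). pose proof (Rabs_pos (h^2-2*N)).
  assert (Rabs (U h - 1) * (2*h) <= (l+2)*(2*h)) by (apply Rmult_le_compat_r; lra).
  assert (Rabs (h^2 - 2*N) * (Rabs q * h) <= (1+2*N) * ((Rabs (U2 0) + 1) * h)).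
  { apply Rmult_le_compat; try nra. }
  nra. }
destruct hW0 as [C [d0 [hC [hd0 hb]]]].
assert (hWz : forall a, 0 < a < A -> W a = 0).
{ intros a ha.
  assert (hga : g a = 0).
  { destruct (Req_dec (g a) 0) as [e|ne]; auto. exfalso.
    assert (hpa : 0 < Rabs (g a)) by (apply Rabs_pos_lt; auto).
    set (h := Rmin (Rmin d0 A) (Rmin 1 (Rabs (g a) / (2*C))) / 2).
    assert (hh0 : 0 < h).
    { unfold h. assert (0 < Rabs (g a) / (2*C)) by (apply Rdiv_lt_0_compat; lra).
      apply Rdiv_lt_0_compat; [|lra]; repeat apply Rmin_glb_lt; lra. }
    pose proof (Rmin_l (Rmin d0 A) (Rmin 1 (Rabs (g a) / (2*C)))).
    pose proof (Rmin_r (Rmin d0 A) (Rmin 1 (Rabs (g a) / (2*C)))).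
    pose proof (Rmin_l d0 A). pose proof (Rmin_r d0 A).
    pose proof (Rmin_l 1 (Rabs (g a) / (2*C))). pose proof (Rmin_r 1 (Rabs (g a) / (2*C))).
    assert (hh1 : h < d0) by (unfold h; lra).
    assert (hh2 : h < A) by (unfold h; lra).
    assert (hh3 : h < 1) by (unfold h; lra).
    assert (hh4 : h <= Rabs (g a) / (2*C) / 2) by (unfold h; lra).
    assert (hCh : C * h <= Rabs (g a) / 4).
    { apply Rmult_le_compat_l with (r := C) in hh4; [|lra].
      replace (C * (Rabs (g a) / (2*C) / 2)) with (Rabs (g a) / 4) in hh4 by (field; lra). lra. }
    specialize (hb h (conj hh0 hh1)).
    pose proof (hgc a h ha (conj hh0 hh2)) as E.
    assert (hexp : exp ((N-1)*ln h - h^2/4) <= 1).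
    { assert (ln h < 0) by (rewrite <- ln_1; apply ln_increasing; lra).
      assert (hx : (N-1)*ln h - h^2/4 <= 0) by nra.
      destruct (Rle_lt_or_eq_dec _ _ hx) as [hx'|hx'].
      - left. apply Rlt_le_trans with (exp 0); [apply exp_increasing; exact hx'| rewrite exp_0; lra].
      - rewrite hx', exp_0. lra. }
    assert (Eg : Rabs (g h) = exp ((N-1)*ln h - h^2/4) * Rabs (W h)).
    { unfold g. rewrite Rabs_mult, (Rabs_pos_eq (exp _)) by (left; apply exp_pos). reflexivity. }
    rewrite E in hpa, hCh.
    pose proof (Rabs_pos (W h)).
    assert (exp ((N-1)*ln h - h^2/4) * Rabs (W h) <= Rabs (W h)) by nra.
    lra. }
  unfold g in hga. apply Rmult_integral in hga. destruct hga as [hga|hga]; auto.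
  pose proof (exp_pos ((N - 1) * ln a - a ^ 2 / 4)). lra. }
assert (hq : 0 < 1/4) by lra.
destruct (hlim (ball (- sqrt 2 / 2) (mkposreal _ hq)) (locally_ball _ _)) as [d3 Hd3].
pose proof sqrt2_lt as hs2. pose proof (sqrt_pos 2) as hs0.
assert (hnear : forall y, A - d3 < y < A -> 0 < y -> U y <= (A - y)^2).
{ intros y hy hy0.
  assert (b : ball A d3 y).
  { unfold ball; simpl; unfold AbsRing_ball, abs, minus, plus, opp; simpl. rewrite Rabs_left1; lra. }
  specialize (Hd3 y b ltac:(lra)). apply ballR in Hd3. simpl in Hd3.
  set (t := sqrt (U y) / (y - A)) in Hd3.
  assert (ht : t > -1) by (apply Rabs_lt_between in Hd3; lra).
  assert (hst : sqrt (U y) = t * (y - A)) by (unfold t; field; lra).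
  assert (hUy : 0 <= U y) by (apply hpos; lra).
  pose proof (sqrt_sqrt (U y) hUy). pose proof (sqrt_pos (U y)).
  assert (sqrt (U y) <= A - y) by nra.
  nra. }
set (d := Rmin (Rmin d3 A) (Rmin 1 (A/(10*(A^2+2*N)))) / 2).
assert (hK : 0 < A/(10*(A^2+2*N))) by (apply Rdiv_lt_0_compat; nra).
assert (hd0' : 0 < d).
{ unfold d. apply Rdiv_lt_0_compat; [|lra]. pose proof (cond_pos d3). repeat apply Rmin_glb_lt; lra. }
pose proof (Rmin_l (Rmin d3 A) (Rmin 1 (A/(10*(A^2+2*N))))).
pose proof (Rmin_r (Rmin d3 A) (Rmin 1 (A/(10*(A^2+2*N))))).
pose proof (Rmin_l d3 A). pose proof (Rmin_r d3 A).
pose proof (Rmin_l 1 (A/(10*(A^2+2*N)))). pose proof (Rmin_r 1 (A/(10*(A^2+2*N)))).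
assert (e1 : d < d3) by (unfold d; destruct d3; simpl in *; lra).
assert (e2 : d <= A/2) by (unfold d; lra).
assert (e3 : d <= 1/2) by (unfold d; lra).
assert (e4 : d <= A/(10*(A^2+2*N))) by (unfold d; lra).
assert (e5 : 10 * d * (A^2+2*N) <= A).
{ apply Rmult_le_compat_r with (r := 10*(A^2+2*N)) in e4; [|nra].
  replace (A / (10 * (A ^ 2 + 2 * N)) * (10 * (A ^ 2 + 2 * N))) with A in e4 by (field; nra). lra. }
destruct (MVT_gen U (A - d) (A - d/2) U1) as [xi [hxi hmvt]].
- intros x hx. rewrite Rmin_left in hx by lra. rewrite Rmax_right in hx by lra.
  apply hd; lra.
- intros x hx. rewrite Rmin_left in hx by lra. rewrite Rmax_right in hx by lra.
  apply (cont_of_der _ _ (U1 x)). apply hd; lra.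
- rewrite Rmin_left in hxi by lra. rewrite Rmax_right in hxi by lra.
  assert (u1 : U (A - d) <= d^2) by (replace (d^2) with ((A - (A-d))^2) by ring; apply hnear; lra).
  assert (u2 : U (A - d/2) <= d^2/4) by (replace (d^2/4) with ((A - (A-d/2))^2) by field; apply hnear; lra).
  assert (u3 : U xi <= d^2) by (eapply Rle_trans; [apply hnear; lra| nra]).
  assert (p1 : 0 <= U (A - d)) by (apply hpos; lra).
  assert (p2 : 0 <= U (A - d/2)) by (apply hpos; lra).
  assert (p3 : 0 <= U xi) by (apply hpos; lra).
  replace (A - d/2 - (A - d)) with (d/2) in hmvt by field.
  assert (hU1 : Rabs (U1 xi) <= 2*d).
  { assert (Rabs (U1 xi * (d/2)) <= d^2).
    { rewrite <- hmvt. apply Rabs_le. nra. }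
    rewrite Rabs_mult, (Rabs_pos_eq (d/2)) in H5 by lra. nra. }
  pose proof (hWz xi ltac:(lra)) as hW. unfold W in hW.
  assert (hb1 : Rabs (xi^2 - 2*N) <= A^2 + 2*N).
  { apply Rabs_le. nra. }
  assert (hR : Rabs ((xi^2 - 2*N) * U1 xi) <= A/5).
  { rewrite Rabs_mult. pose proof (Rabs_pos (U1 xi)). pose proof (Rabs_pos (xi^2-2*N)).
    assert (Rabs (xi ^ 2 - 2 * N) * Rabs (U1 xi) <= (A^2+2*N) * (2*d)) by (apply Rmult_le_compat; lra).
    nra. }
  assert (U xi - 1 <= -3/4) by nra. assert (2*xi >= A) by lra.
  assert (hl1 : (U xi - 1) * (2 * xi) <= - (3/4) * A) by nra.
  assert (hL : Rabs ((U xi - 1) * (2 * xi)) >= (3/4)*A).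
  { rewrite Rabs_left by nra. lra. }
  assert (hE : (U xi - 1) * (2 * xi) = (xi ^ 2 - 2 * N) * U1 xi) by lra.
  rewrite hE in hL. lra.
Qed.
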